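(* For every positive integer $n$, $$\overline{\mathrm{spt}}_{\omega}(n)\equiv\overline{\mathrm{spt}}(n)\equiv\begin{cases}1\pmod 2 & \text{if } n=k^2 \text{ or } n=2k^2 \text{ for some integer } k,\\ 0\pmod 2&\text{otherwise.}\end{cases}$$
   Context: $(a;q)_n=\prod_{j=0}^{n-1}(1-aq^j)$, $(a;q)_\infty=\prod_{j\ge0}(1-aq^j)$. $\overline{\mathrm{spt}}(n)$ is defined by $\sum_{n\ge1}\overline{\mathrm{spt}}(n)q^n=\sum_{n\ge1}\frac{q^n(-q^{n+1};q)_\infty}{(1-q^n)^2(q^{n+1};q)_\infty}$ (the number of smallest parts in overpartitions of $n$ whose smallest part is overlined). $\overline{\mathrm{spt}}_{\omega}(n)$ is defined by $\sum_{n\ge1}\overline{\mathrm{spt}}_{\omega}(n)q^n=\sum_{n\ge1}\frac{q^{n}(-q^{n+1};q)_{n}(-q^{2n+2};q^2)_{\infty}}{(1-q^n)^2(q^{n+1};q)_n(q^{2n+2};q^2)_{\infty}}$ (the number of smallest parts in overpartitions of $n$ with smallest part overlined and all odd parts less than twice the smallest part). *)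

(* Defs.v *)
From mathcomp Require Import all_boot.
Set Implicit Arguments. Unset Strict Implicit. Unset Printing Implicit Defensive.

(* Formal power series in q with natural-number coefficients, represented by
   their coefficient sequence: f n = coefficient of q^n. *)
Definition series := nat -> nat.

Definition sone : series := fun n => if n == 0 then 1 else 0.

Definition sshift (m : nat) (f : series) : series :=
  fun n => if m <= n then f (n - m) else 0.

Definition smul1p (k : nat) (f : series) : series := fun n => f n + sshift k f n.

(* multiplication by 1/(1 - q^k) = sum_{j>=0} q^(j k), for k >= 1 *)
Definition sdiv1m (k : nat) (f : series) : series :=
  fun n => \sum_(0 <= j < (n %/ k).+1) f (n - j * k).

Definition sratio (k : nat) (f : series) : series := sdiv1m k (smul1p k f).

Definition sratios (s : seq nat) (f : series) : series := foldr sratio f s.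

(* Truncation of the generating function of spt-bar that is exact up to q^N:
   sum_{m=1}^{N} q^m / (1-q^m)^2 * prod_{j=m+1}^{N} (1+q^j)/(1-q^j).
   (Terms with m > N and factors with j > N do not affect coefficients of
   q^i, i <= N.) *)
Definition sptbar_series (N : nat) : series :=
  fun i => \sum_(1 <= m < N.+1)
    sshift m (sdiv1m m (sdiv1m m (sratios (iota m.+1 (N - m)) sone))) i.

Definition sptbar (n : nat) : nat := sptbar_series n n.

(* Truncation, exact up to q^N, of
   sum_{m>=1} q^m (-q^{m+1};q)_m (-q^{2m+2};q^2)_oo
                / ((1-q^m)^2 (q^{m+1};q)_m (q^{2m+2};q^2)_oo)
   = sum_{m>=1} q^m/(1-q^m)^2 * prod_{j=m+1}^{2m} (1+q^j)/(1-q^j)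
                * prod_{j>=m+1} (1+q^{2j})/(1-q^{2j}),
   the last product truncated to 2j <= N. *)
Definition sptbarw_series (N : nat) : series :=
  fun i => \sum_(1 <= m < N.+1)
    sshift m (sdiv1m m (sdiv1m m
      (sratios (iota m.+1 m)
        (sratios [seq 2 * j | j <- iota m.+1 (N./2 - m)] sone)))) i.

Definition sptbarw (n : nat) : nat := sptbarw_series n n.

(* Main.v *)
Require Import Defs.
From mathcomp Require Import all_boot zify.
Set Implicit Arguments. Unset Strict Implicit. Unset Printing Implicit Defensive.

Definition cong (f g : series) := forall i, f i %% 2 = g i %% 2.

Lemma sdiv1m_cong k f g : cong f g -> cong (sdiv1m k f) (sdiv1m k g).
Proof.
move=> H i; rewrite /sdiv1m -[LHS]modn_summ -[RHS]modn_summ; congr (_ %% _).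
by apply: eq_bigr => j _; exact: H.
Qed.

Lemma sshift_cong k f g : cong f g -> cong (sshift k f) (sshift k g).
Proof. by move=> H i; rewrite /sshift; case: ifP. Qed.

Lemma smul1p_cong k f g : cong f g -> cong (smul1p k f) (smul1p k g).
Proof.
move=> H i; rewrite /smul1p -[LHS]modnDm -[RHS]modnDm H.
by rewrite (sshift_cong k H).
Qed.

Lemma cong_trans f g h : cong f g -> cong g h -> cong f h.
Proof. by move=> H1 H2 i; rewrite H1 H2. Qed.

Lemma sratio_id k f : 0 < k -> cong (sratio k f) f.
Proof.
move=> k0 i; rewrite /sratio /sdiv1m /smul1p big_split /=.
rewrite big_nat_recl // (big_nat_recr _ _ _ (leq0n _)) /=.
have -> : sshift k f (i - i %/ k * k) = 0.
  rewrite /sshift {1}(divn_eq i k) addKn leqNgt ltn_pmod //.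
have -> : \sum_(0 <= j < i %/ k) sshift k f (i - j * k)
        = \sum_(0 <= j < i %/ k) f (i - j.+1 * k).
  rewrite !big_nat; apply: eq_bigr => j /andP[_ hj].
  have h1 : j.+1 * k <= i.
    apply: leq_trans (leq_divM i k); by rewrite leq_mul2r hj orbT.
  rewrite /sshift mulSnr in h1 *.
  have -> : k <= i - j * k by lia.
  by rewrite subnDA.
rewrite mul0n subn0 addn0 -addnA addnn -muln2 addnC.
by rewrite -modnDm modnMl add0n modn_mod.
Qed.

Lemma sratios_id s f : all (fun k => 0 < k) s -> cong (sratios s f) f.
Proof.
elim: s => [|k s IH] /=; first by [].
move=> /andP[k0 hs]; apply: cong_trans (sratio_id _ k0) (IH hs).
Qed.
Lemma sdiv1m_sone m i : 0 < m -> sdiv1m m sone i = (m %| i).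
Proof.
move=> m0; rewrite /sdiv1m (big_nat_recr _ _ _ (leq0n _)) /=.
rewrite big_nat big1 ?add0n; last first.
  move=> j /andP[_ hj]; rewrite /sone.
  have h1 : j.+1 * m <= i.
    apply: leq_trans (leq_divM i m); by rewrite leq_mul2r hj orbT.
  rewrite mulSnr in h1.
  have -> : (i - j * m == 0) = false by apply/negbTE; lia.
  by [].
by rewrite /sone {1}(divn_eq i m) addKn /dvdn.
Qed.

Lemma dvd_sub_mul m i j : j * m <= i -> (m %| i - j * m) = (m %| i).
Proof.
move=> h; by rewrite -{2}(subnK h) dvdn_addl // dvdn_mull.
Qed.

Lemma sdiv1m_dvd m i : 0 < m ->
  sdiv1m m (sdiv1m m sone) i = (m %| i) * (i %/ m).+1.
Proof.
move=> m0; rewrite /sdiv1m.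
rewrite (eq_big_nat _ _ (F2 := fun _ => nat_of_bool (m %| i))).
  by rewrite sum_nat_const_nat subn0 mulnC.
move=> j /andP[_ hj]; rewrite -/(sdiv1m m sone (i - j * m)) sdiv1m_sone //.
rewrite dvd_sub_mul //; apply: leq_trans (leq_divM i m).
by rewrite leq_mul2r -ltnS hj orbT.
Qed.

Definition Tm m i := sshift m (sdiv1m m (sdiv1m m sone)) i.

Lemma Tm_mod m i : 0 < m -> m <= i ->
  Tm m i %% 2 = ((m %| i) && odd (i %/ m)) %% 2.
Proof.
move=> m0 mi; rewrite /Tm /sshift mi sdiv1m_dvd //.
have := @dvd_sub_mul m i 1; rewrite !mul1n => -> //.
case: (boolP (m %| i)) mi => [/dvdnP [t ->] mi | _ _]; last by [].
rewrite mulnK // mul1n.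
have t0 : 0 < t by case: t mi => //; rewrite mul0n; lia.
rewrite -{2}(mul1n m) -mulnBl mulnK // subn1 prednK // modn2.
by case: (odd t).
Qed.

Definition cnt n := \sum_(1 <= m < n.+1) ((m %| n) && odd (n %/ m)).

Lemma all_iota_pos a l : all (fun k => 0 < k) (iota a.+1 l).
Proof. by apply/allP => k; rewrite mem_iota => /andP[h _]; exact: leq_trans _ h. Qed.

Lemma all_map2_pos a l : all (fun k => 0 < k) [seq 2 * j | j <- iota a.+1 l].
Proof.
rewrite all_map; apply/allP => k; rewrite mem_iota => /andP[h _] /=.
by rewrite muln_gt0 /= (leq_trans _ h).
Qed.

Lemma sum_cong n (F : nat -> series) :
  (forall m, 0 < m -> cong (F m) (sdiv1m m (sdiv1m m sone))) ->
  (\sum_(1 <= m < n.+1) sshift m (F m) n) %% 2 = cnt n %% 2.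
Proof.
move=> H; rewrite /cnt -[LHS]modn_summ -[RHS]modn_summ; congr (_ %% _).
apply: eq_big_nat => m /andP[m1 mn].
rewrite (sshift_cong m (H m m1)) -/(Tm m n) Tm_mod //.
Qed.

Lemma sptbar_cnt n : sptbar n %% 2 = cnt n %% 2.
Proof.
apply: sum_cong => m m0.
apply: sdiv1m_cong; apply: sdiv1m_cong; apply: sratios_id; exact: all_iota_pos.
Qed.

Lemma sptbarw_cnt n : sptbarw n %% 2 = cnt n %% 2.
Proof.
apply: sum_cong => m m0.
apply: sdiv1m_cong; apply: sdiv1m_cong.
apply: cong_trans (sratios_id _ (all_iota_pos _ _)) _.
exact: sratios_id (all_map2_pos _ _).
Qed.
Lemma invol_card (T : finType) (f : T -> T) (A : {set T}) :
  {in A, forall x, f x \in A /\ f (f x) = x} ->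
  odd #|A| = odd #|[set x in A | f x == x]|.
Proof.
have [k] := ubnP #|A|; elim: k A => // k IH A hk H.
case: (set_0Vmem A) => [-> | [x xA]].
  by rewrite cards0 (_ : [set x in set0 | _] = set0) ?cards0 //; apply/setP => y; rewrite !inE.
have [fxA ffx] := H x xA.
case: (eqVneq (f x) x) => [fx | fxne].
  rewrite (cardsD1 x A) xA (cardsD1 x [set x in A | f x == x]) inE xA fx eqxx /=.
  have -> : [set x0 in A | f x0 == x0] :\ x = [set y in A :\ x | f y == y].
    by apply/setP => y; rewrite !inE andbA.
  congr (~~ _); apply: IH.
    by move: hk; rewrite (cardsD1 x A) xA.
  move=> y; rewrite !inE => /andP[yx yA]; have [fyA ffy] := H y yA.
  split => //; rewrite fyA andbT; apply: contra yx => /eqP e.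
  by rewrite -ffy e fx.
have fxx : (f x \in A :\ x) by rewrite !inE fxne.
rewrite (cardsD1 x A) xA (cardsD1 (f x) (A :\ x)) fxx /=.
have -> : [set x0 in A | f x0 == x0] = [set y in A :\ x :\ f x | f y == y].
  apply/setP => y; rewrite !inE.
  case: (eqVneq y (f x)) => [-> | _]; first by rewrite ffx eq_sym (negbTE fxne) !andbF.
  case: (eqVneq y x) => [-> | _]; first by rewrite (negbTE fxne) andbF.
  by [].
rewrite negbK; apply: IH.
  by move: hk; rewrite (cardsD1 x A) xA (cardsD1 (f x) (A :\ x)) fxx; lia.
move=> y; rewrite !inE => /andP[yfx /andP[yx yA]]; have [fyA ffy] := H y yA.
split => //; rewrite fyA andbT; apply/andP; split.
  by apply: contra yx => /eqP e; rewrite -ffy e ffx.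
by apply: contra yfx => /eqP e; rewrite -ffy e.
Qed.
Lemma memA a o m : odd o ->
  reflect (exists e d, m = 2^a * e /\ e * d = o)
          ((0 < m) && (m %| 2^a*o) && odd ((2^a*o) %/ m)).
Proof.
move=> oo; apply: (iffP idP).
  move=> /andP[/andP[m0 dv] od].
  set q := (2^a*o) %/ m in od.
  have nq : 2^a * o = q * m by rewrite divnK.
  have : 2^a %| m * q by rewrite mulnC -nq dvdn_mulr.
  rewrite Gauss_dvdl; last by apply: coprimeXl; rewrite coprime2n.
  move=> /dvdnP [e me]; exists e, q; split; first by rewrite me mulnC.
  apply/eqP; rewrite -(eqn_pmul2l (expn_gt0 2 a)) nq me; apply/eqP; nia.
move=> [e [d [-> eo]]].
have o0 : 0 < o by case: o oo {eo}.
have e0 : 0 < e by case: e eo o0 => //; rewrite mul0n => <-.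
rewrite muln_gt0 expn_gt0 e0 /= -eo mulnA dvdn_mulr //= mulKn ?muln_gt0 ?expn_gt0 ?e0 //.
by move: oo; rewrite -eo oddM => /andP[].
Qed.

Lemma helper a o e d : e * d = o -> 0 < o ->
  (2^a*(2^a*o)) %/ (2^a*e) = 2^a*d /\ 2^a*d < (2^a*o).+1.
Proof.
move=> ed o0; have e0 : 0 < e by case: e ed o0 => //; rewrite mul0n => <-.
split.
  have -> : 2^a*(2^a*o) = (2^a*e)*(2^a*d) by rewrite -ed; nia.
  by rewrite mulKn // muln_gt0 expn_gt0 e0.
by rewrite ltnS leq_mul2l -ed leq_pmull // orbT.
Qed.


Definition Aset n := [set m : 'I_n.+1 | (0 < m) && (m %| n) && odd (n %/ m)].

Lemma cnt_odd_iff a o : odd o ->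
  odd #|Aset (2^a*o)| <-> exists s, o = s * s.
Proof.
move=> oo; have o0 : 0 < o by case: o oo.
set n := 2^a*o.
pose f := fun m : 'I_n.+1 => (inord ((2^a*n) %/ m) : 'I_n.+1).
have fval : forall (m : 'I_n.+1) e d, val m = 2^a*e -> e * d = o -> val (f m) = 2^a*d.
  move=> m e d me ed; have [h1 h2] := helper a ed o0.
  by rewrite /f /= me h1 inordK.
rewrite (invol_card (f := f)); last first.
  move=> m; rewrite inE => /memA -/(_ oo) [e [d [me ed]]].
  have fm := fval m e d me ed.
  split; first by rewrite inE; apply/memA => //; exists d, e; split => //; rewrite mulnC.
  apply: val_inj; rewrite (fval _ d e fm) // mulnC //.
split.
  move=> /odd_gt0; rewrite card_gt0 => /set0Pn [m]; rewrite !inE => /andP [/memA -/(_ oo) [e [d [me ed]]] /eqP fm].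
  have h := fval m e d me ed; rewrite fm in h.
  have : 2^a*d == 2^a*e by rewrite -me -h.
  rewrite eqn_pmul2l ?expn_gt0 // => /eqP de.
  by exists e; rewrite -ed de.
move=> [s os].
have s0 : 0 < s by case: s os o0 => //; rewrite mul0n => ->.
have sn : 2^a*s < n.+1 by rewrite ltnS leq_mul2l os leq_pmulr // orbT.
rewrite (_ : [set x in Aset n | f x == x] = [set inord (2^a*s)]) ?cards1 //.
apply/setP => m; rewrite !inE; apply/andP/eqP.
  move=> [/memA -/(_ oo) [e [d [me ed]]] /eqP fm].
  have h := fval m e d me ed; rewrite fm in h.
  have : 2^a*d == 2^a*e by rewrite -me -h.
  rewrite eqn_pmul2l ?expn_gt0 // => /eqP de.
  have es : e = s by move: ed; rewrite os de; nia.
  by apply: val_inj; rewrite /= inordK // me es.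
move=> ->; have vm : val (inord (2^a*s) : 'I_n.+1) = 2^a*s by rewrite /= inordK.
split; first by apply/memA => //; exists s, s; rewrite vm.
by apply/eqP; apply: val_inj; rewrite (fval _ s s vm (esym os)).
Qed.

Lemma cnt_card n : cnt n = #|Aset n|.
Proof.
rewrite /Aset -sum1dep_card big_mkcond /=.
rewrite (eq_bigr (fun m : 'I_n.+1 => nat_of_bool ((0 < m) && (m %| n) && odd (n %/ m)))); last first.
  by move=> i _; case: (_ && _).
rewrite -(big_mkord xpredT (fun m => nat_of_bool ((0 < m) && (m %| n) && odd (n %/ m)))).
rewrite big_nat_recl // /= add0n /cnt big_add1 /=.
by [].
Qed.

Lemma t a b s : a = 1 + 2 * b -> 2^a * (s*s) = 2 * (2^b*s)^2.
Proof. move=> ->; rewrite expnD (mulnC 2 b) expnM expnMn expn1 -!mulnn; nia. Qed.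
Lemma t2 a b s : a = 0 + 2 * b -> 2^a * (s*s) = (2^b*s)^2.
Proof. move=> ->; rewrite expnD (mulnC 2 b) expnM expnMn expn0 -!mulnn; nia. Qed.
Lemma decomp k : 0 < k -> exists b s, odd s /\ k = 2^b * s.
Proof.
move=> k0; have [s cs ks] := pfactor_coprime (isT : prime 2) k0.
by exists (logn 2 k), s; rewrite -coprime2n mulnC.
Qed.

Lemma key n : 0 < n -> odd (cnt n) <-> exists k : nat, n = k ^ 2 \/ n = 2 * k ^ 2.
Proof.
move=> n0; rewrite cnt_card; split.
  have [a [o [oo ->]]] := decomp n0.
  move=> /(cnt_odd_iff a oo) [s ->].
  have ha : a = odd a + 2 * a./2 by rewrite -{1}(odd_double_half a) -muln2 mulnC.
  exists (2^(a./2) * s); move: ha; case: (odd a) => ha.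
    by right; apply: t.
  by left; apply: t2.
move=> [k hk].
have k0 : 0 < k by case: k hk n0 => // [[]] -> .
have [b [s [os ks]]] := decomp k0.
have oss : odd (s * s) by rewrite oddM os.
case: hk => ->.
  by rewrite ks -(@t2 (0 + 2 * b) b s) //; apply/(cnt_odd_iff _ oss); exists s.
by rewrite ks -(@t (1 + 2 * b) b s) //; apply/(cnt_odd_iff _ oss); exists s.
Qed.

Theorem theorem1p6 (n : nat) : 0 < n ->
  sptbarw n = sptbar n %[mod 2] /\
  ((exists k : nat, n = k ^ 2 \/ n = 2 * k ^ 2) -> sptbar n = 1 %[mod 2]) /\
  (~ (exists k : nat, n = k ^ 2 \/ n = 2 * k ^ 2) -> sptbar n = 0 %[mod 2]).
Proof.
move=> n0; split; first by rewrite sptbarw_cnt sptbar_cnt.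
rewrite sptbar_cnt modn2; split.
  by move=> /(key n0) ->.
move=> hn; case: (boolP (odd (cnt n))) => // /(key n0) h; by case: hn.
Qed.
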